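(* Let $R$ be a $K$-algebra, $J$ an ideal of $R$ which is locally f.d.ss, and $T$ a finite dimensional semisimple subalgebra of $R$ such that $R = T \oplus J$ as $K$-vector spaces. Then $R$ is locally f.d.ss if and only if the following holds: for every finite subset $Y \subseteq J$ there is an idempotent $e \in J$ such that $Y \subseteq eJe$ and $et = te$ for all $t \in T$.
   Context: $K$ is a field. All algebras are associative but not necessarily unital $K$-algebras; ideals are two-sided ring ideals that are also $K$-subspaces. A $K$-algebra $R$ is locally f.d.ss if every finite subset of $R$ is contained in a subalgebra of $R$ that is a finite dimensional semisimple $K$-algebra. *)

(* Defs.v *)
From mathcomp Require Import all_boot all_algebra.
Set Implicit Arguments. Unset Strict Implicit. Unset Printing Implicit Defensive.
Import GRing.Theory.
Local Open Scope ring_scope.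

Section NuAlg.
Variables (K : fieldType) (V : lmodType K) (mul : V -> V -> V).

Definition is_nualg : Prop :=
  [/\ forall x y z, mul x (mul y z) = mul (mul x y) z,
      forall x y z, mul (x + y) z = mul x z + mul y z,
      forall x y z, mul x (y + z) = mul x y + mul x z,
      forall (a : K) x y, mul (a *: x) y = a *: mul x y
    & forall (a : K) x y, mul x (a *: y) = a *: mul x y].

Definition subset (A B : V -> Prop) : Prop := forall x, A x -> B x.

Definition seq_in (s : seq V) (A : V -> Prop) : Prop :=
  forall i, (i < size s)%N -> A (nth 0 s i).

Definition subspace (S : V -> Prop) : Prop :=
  [/\ S 0, forall x y, S x -> S y -> S (x + y)
    & forall (a : K) x, S x -> S (a *: x)].

Definition span (s : seq V) : V -> Prop :=
  fun x => exists c : 'I_(size s) -> K, x = \sum_(i < size s) c i *: nth 0 s i.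

Definition fin_dim (S : V -> Prop) : Prop :=
  exists s : seq V, forall x, S x <-> span s x.

Definition subalg (S : V -> Prop) : Prop :=
  subspace S /\ forall x y, S x -> S y -> S (mul x y).

Definition ideal_in (A I : V -> Prop) : Prop :=
  [/\ subspace I, subset I A
    & forall a x, A a -> I x -> I (mul a x) /\ I (mul x a)].

Definition nilpotent (I : V -> Prop) : Prop :=
  exists n : nat, forall (x : V) (s : seq V),
    I x -> seq_in s I -> size s = n -> foldl mul x s = 0.

(* semisimple (for a finite dimensional algebra A): its radical, the largest
   nilpotent ideal, is zero, i.e. A has no nonzero nilpotent ideal *)
Definition semisimple (A : V -> Prop) : Prop :=
  forall I, ideal_in A I -> nilpotent I -> forall x, I x -> x = 0.

Definition fdss (A : V -> Prop) : Prop :=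
  [/\ subalg A, fin_dim A & semisimple A].

Definition locally_fdss (A : V -> Prop) : Prop :=
  forall s : seq V, seq_in s A ->
    exists B : V -> Prop, [/\ fdss B, subset B A & seq_in s B].

End NuAlg.

(* Main.v *)
From Pilot Require Import Defs.
From mathcomp Require Import all_boot all_algebra.
From Stdlib Require Import Classical.
Import Pilot.Defs.
Set Implicit Arguments. Unset Strict Implicit. Unset Printing Implicit Defensive.
Import GRing.Theory.
Local Open Scope ring_scope.

Section Basics.
Variables (K : fieldType) (V : lmodType K).

Lemma span_sub (P : V -> Prop) (s : seq V) x :
  subspace P -> seq_in s P -> span s x -> P x.
Proof.
case=> P0 PD PZ Hs [c ->].
elim/big_ind: _ => // i _; apply: PZ; exact: Hs.
Qed.

Lemma subN (P : V -> Prop) x : subspace P -> P x -> P (- x).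
Proof. by case=> _ _ PZ Px; rewrite -scaleN1r; apply: PZ. Qed.

Lemma subB (P : V -> Prop) x y : subspace P -> P x -> P y -> P (x - y).
Proof. move=> sP Px Py; case: (sP) => _ PD _; apply: PD => //; exact: subN. Qed.

Lemma subsum (P : V -> Prop) (I : Type) (r : seq I) (F : I -> V) :
  subspace P -> (forall i, P (F i)) -> P (\sum_(i <- r) F i).
Proof. by case=> P0 PD _ HF; elim/big_ind: _ => // i _; apply: HF. Qed.

Lemma subsum_seq (P : V -> Prop) (I : eqType) (r : seq I) (F : I -> V) :
  subspace P -> (forall i, i \in r -> P (F i)) -> P (\sum_(i <- r) F i).
Proof. case=> P0 PD _ HF; rewrite big_seq; elim/big_ind: _ => // i; exact: HF. Qed.

Definition spanN (s : seq V) (x : V) :=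
  exists c : nat -> K, x = \sum_(i < size s) c i *: s`_i.

Lemma spanNE s x : span s x <-> spanN s x.
Proof.
split.
  case=> c ->.
  exists (fun k => if (insub k : option 'I_(size s)) is Some i then c i else 0).
  by apply: eq_bigr => i _; rewrite valK.
by case=> c ->; exists (fun i => c i).
Qed.

Lemma fin_dim_image (A : V -> Prop) (f : V -> V) :
  fin_dim A -> f 0 = 0 -> (forall x y, f (x + y) = f x + f y) ->
  (forall (a : K) x, f (a *: x) = a *: f x) ->
  fin_dim (fun y => exists x, A x /\ y = f x).
Proof.
case=> s hs f0 fD fZ; exists (map f s) => y; rewrite spanNE; split.
  case=> x [/hs /spanNE [c ->] ->]; exists c.
  rewrite size_map (big_morph f fD f0); apply: eq_bigr => i _.
  by rewrite fZ (nth_map 0).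
case=> c ->; exists (\sum_(i < size s) c i *: s`_i); split.
  by apply/hs/spanNE; exists c.
rewrite size_map (big_morph f fD f0); apply: eq_bigr => i _.
by rewrite fZ (nth_map 0).
Qed.

Lemma fin_dim_add (A C : V -> Prop) :
  fin_dim A -> fin_dim C ->
  fin_dim (fun y => exists a c, [/\ A a, C c & y = a + c]).
Proof.
case=> s hs [s' hs']; exists (s ++ s') => y; rewrite spanNE; split.
  case=> a [c [/hs /spanNE [ca ->] /hs' /spanNE [cc ->] ->]].
  exists (fun i => if (i < size s)%N then ca i else cc (i - size s)%N).
  rewrite size_cat big_split_ord /=; congr (_ + _); apply: eq_bigr => i _.
    by rewrite /= ltn_ord nth_cat ltn_ord.
  by rewrite /= ltnNge leq_addr /= nth_cat ltnNge leq_addr /= addKn.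
case=> c ->; rewrite size_cat big_split_ord /=.
exists (\sum_(i < size s) c (lshift (size s') i) *: (s ++ s')`_(lshift (size s') i)).
exists (\sum_(i < size s') c (rshift (size s) i) *: (s ++ s')`_(rshift (size s) i)).
split=> //.
  apply/hs/spanNE; exists c; apply: eq_bigr => i _; by rewrite /= nth_cat ltn_ord.
apply/hs'/spanNE; exists (fun i => c (size s + i)%N); apply: eq_bigr => i _.
by rewrite /= nth_cat ltnNge leq_addr /= addKn.
Qed.

Lemma vspace_rep (W : vectType K) (Q : W -> Prop) :
  Q 0 -> (forall x y, Q x -> Q y -> Q (x + y)) -> (forall a x, Q x -> Q (a *: x)) ->
  exists U : {vspace W}, forall x, x \in U <-> Q x.
Proof.
move=> Q0 QD QZ.
suff H : forall k (U : {vspace W}), (forall x, x \in U -> Q x) ->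
   (\dim {:W} - \dim U < k)%N -> exists U' : {vspace W}, forall x, x \in U' <-> Q x.
  apply: (H (\dim {:W}).+1 0%VS); last by rewrite ltnS leq_subr.
  by move=> x; rewrite memv0 => /eqP ->.
elim=> // k IH U HU Hk.
case: (classic (exists x, Q x /\ x \notin U)) => [[x [Qx xU]] | H].
  apply: (IH (U + <[x]>)%VS).
    move=> y /memv_addP [u uU [v /vlineP [a ->] ->]]; apply: QD; first exact: HU.
    exact: QZ.
  have sUx : (U <= U + <[x]>)%VS by apply: addvSl.
  have ne : U != (U + <[x]>)%VS.
    apply/eqP => E; move: xU; rewrite E; case/negP.
    apply/memv_addP; exists 0; first exact: mem0v.
    by exists x; [exact: memv_line | rewrite add0r].
  have lt : (\dim U < \dim (U + <[x]>))%N by rewrite (ltn_leqif (dimv_leqif_eq sUx)).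
  have le : (\dim (U + <[x]>) <= \dim {:W})%N by apply: dimvS; apply: subvf.
  rewrite ltnS in Hk; apply: leq_trans Hk.
  rewrite ltn_sub2l //; exact: leq_trans lt le.
exists U => x; split; first exact: HU.
move=> Qx; apply/negPn/negP => nx; apply: H; by exists x.
Qed.

End Basics.
Section Ind.
Variables (K : fieldType) (V : lmodType K).

Lemma sub_ind (A : V -> Prop) (Pr : (V -> Prop) -> Prop) : fin_dim A ->
  (forall P, subspace P -> subset P A ->
     (forall P', subspace P' -> subset P' P -> (exists x, P x /\ ~ P' x) -> Pr P') -> Pr P) ->
  forall P, subspace P -> subset P A -> Pr P.
Proof.
case=> s hs H.
pose n := size s.
pose f (c : 'rV[K]_n) := \sum_(i < n) c 0 i *: s`_i.
have f0 : f 0 = 0 by rewrite /f big1 // => i _; rewrite mxE scale0r.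
have fD : forall x y, f (x + y) = f x + f y.
  by move=> x y; rewrite /f -big_split; apply: eq_bigr => i _; rewrite mxE scalerDl.
have fZ : forall a x, f (a *: x) = a *: f x.
  by move=> a x; rewrite /f scaler_sumr; apply: eq_bigr => i _; rewrite mxE scalerA.
have ex : forall P, subspace P -> exists U : {vspace 'rV[K]_n}, forall c, c \in U <-> P (f c).
  move=> P [P0 PD PZ]; apply: vspace_rep => [|x y|a x]; rewrite ?f0 ?fD ?fZ //; auto.
suff M : forall k P, subspace P -> subset P A ->
    (exists U : {vspace 'rV[K]_n}, (forall c, c \in U <-> P (f c)) /\ (\dim U < k)%N) -> Pr P.
  move=> P sP sPA; have [U hU] := ex P sP; apply: (M (\dim U).+1) => //.
  by exists U; split.
elim=> [|k IH] P sP sPA [U [hU dU]] //.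
apply: H => // P' sP' sP'P [x [Px nP'x]].
have [U' hU'] := ex P' sP'.
apply: IH => //; first by move=> y /sP'P /sPA.
exists U'; split => //.
have sub : (U' <= U)%VS by apply/subvP => c /hU' /sP'P /hU.
have ne : U' != U.
  apply/eqP => E.
  have : span s x by apply/hs/sPA.
  case=> c xE.
  have fr : f (\row_i c i) = x by rewrite xE /f; apply: eq_bigr => i _; rewrite mxE.
  apply: nP'x; rewrite -fr; apply/hU'; rewrite E; apply/hU; by rewrite fr.
have := dimv_leqif_eq sub; move/ltn_leqif; rewrite ne /= => lt.
rewrite ltnS in dU; exact: leq_trans lt dU.
Qed.

End Ind.
Section Alg.
Variables (K : fieldType) (V : lmodType K) (mul : V -> V -> V).
Hypothesis alg : is_nualg mul.
Local Notation "x ** y" := (mul x y) (at level 40, left associativity).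

Lemma mA x y z : x ** (y ** z) = x ** y ** z. Proof. by case: alg => h _ _ _ _; apply: h. Qed.
Lemma mDl x y z : (x + y) ** z = x ** z + y ** z. Proof. by case: alg => _ h _ _ _; apply: h. Qed.
Lemma mDr x y z : x ** (y + z) = x ** y + x ** z. Proof. by case: alg => _ _ h _ _; apply: h. Qed.
Lemma mZl (a : K) x y : (a *: x) ** y = a *: (x ** y). Proof. by case: alg => _ _ _ h _; apply: h. Qed.
Lemma mZr (a : K) x y : x ** (a *: y) = a *: (x ** y). Proof. by case: alg => _ _ _ _ h; apply: h. Qed.
Lemma m0l x : 0 ** x = 0.
Proof. by rewrite -[X in X ** _](scale0r (0:V)) mZl scale0r. Qed.
Lemma m0r x : x ** 0 = 0.
Proof. by rewrite -[X in _ ** X](scale0r (0:V)) mZr scale0r. Qed.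
Lemma mNl x y : (- x) ** y = - (x ** y).
Proof. by rewrite -scaleN1r mZl scaleN1r. Qed.
Lemma mNr x y : x ** (- y) = - (x ** y).
Proof. by rewrite -scaleN1r mZr scaleN1r. Qed.
Lemma mBl x y z : (x - y) ** z = x ** z - y ** z.
Proof. by rewrite mDl mNl. Qed.
Lemma mBr x y z : x ** (y - z) = x ** y - x ** z.
Proof. by rewrite mDr mNr. Qed.
Lemma m_sumr (I : Type) (r : seq I) (F : I -> V) x :
  x ** (\sum_(i <- r) F i) = \sum_(i <- r) x ** F i.
Proof. by rewrite (big_morph (mul x) (mDr x) (m0r x)). Qed.
Lemma m_suml (I : Type) (r : seq I) (F : I -> V) x :
  (\sum_(i <- r) F i) ** x = \sum_(i <- r) F i ** x.
Proof. by rewrite (big_morph (mul^~ x) (fun a b => mDl a b x) (m0l x)). Qed.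

Definition lideal (A L : V -> Prop) :=
  [/\ subspace L, subset L A & forall a x, A a -> L x -> L (a ** x)].
Definition rideal (A L : V -> Prop) :=
  [/\ subspace L, subset L A & forall a x, A a -> L x -> L (x ** a)].

Lemma sq0_nil (I : V -> Prop) : (forall x y, I x -> I y -> x ** y = 0) -> nilpotent mul I.
Proof.
move=> H; exists 1%N => x [|y [|z s]] // Ix Hs _ /=.
by apply: H => //; apply: (Hs 0%N).
Qed.

Lemma sqzero_left (A L : V -> Prop) : subalg mul A -> semisimple mul A -> lideal A L ->
  (forall x y, L x -> L y -> x ** y = 0) -> forall x, L x -> x = 0.
Proof.
move=> [[A0 AD AZ] AM] ssA [[L0 LD LZ] LA LM] L2.
pose I x := exists l (s : seq (V * V)), [/\ L l, (forall p, p \in s -> L p.1 /\ A p.2)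
   & x = l + \sum_(p <- s) p.1 ** p.2].
have sI : subspace I.
  split.
  - by exists 0, [::]; rewrite big_nil addr0.
  - move=> x y [l [s [Ll Hs ->]]] [l' [s' [Ll' Hs' ->]]].
    exists (l + l'), (s ++ s'); split; first exact: LD.
      by move=> p; rewrite mem_cat => /orP [/Hs|/Hs'].
    by rewrite big_cat /= addrACA.
  - move=> a x [l [s [Ll Hs ->]]].
    exists (a *: l), (map (fun p => (a *: p.1, p.2)) s); split; first exact: LZ.
      move=> p /mapP [q /Hs [h1 h2] ->] /=; split=> //; exact: LZ.
    by rewrite big_map scalerDr scaler_sumr; congr (_ + _); apply: eq_bigr => p _; rewrite mZl.
have xL : forall x y, I x -> L y -> x ** y = 0.
  move=> x y [l [s [Ll Hs ->]]] Ly; rewrite mDl L2 // add0r m_suml big_seq big1 // => p /Hs [h1 h2].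
  by rewrite -mA L2 //; apply: LM.
move=> x0 Lx0; apply: (ssA I); first split.
- exact: sI.
- move=> x [l [s [Ll Hs ->]]]; apply AD; first exact: LA.
  apply: (subsum_seq (And3 A0 AD AZ)) => p /Hs [h1 h2]; apply: AM => //; exact: LA.
- move=> a x Aa [l [s [Ll Hs ->]]]; split.
    exists (a ** l), (map (fun p => (a ** p.1, p.2)) s); split; first exact: LM.
      by move=> p /mapP [q /Hs [h1 h2] ->] /=; split=> //; apply: LM.
    by rewrite mDr m_sumr big_map; congr (_ + _); apply: eq_bigr => p _; rewrite mA.
  exists 0, ((l, a) :: map (fun p => (p.1, p.2 ** a)) s); split => //.
    move=> p; rewrite in_cons => /orP [/eqP -> //| /mapP [q /Hs [h1 h2] ->] /=].
    by split=> //; apply: AM.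
  by rewrite mDl m_suml big_cons big_map add0r; congr (_ + _); apply: eq_bigr => p _; rewrite mA.
- apply: sq0_nil => x y Ix [l [s [Ll Hs ->]]].
  rewrite mDr xL // add0r m_sumr big_seq big1 // => p /Hs [h1 h2].
  by rewrite mA (xL x p.1) // m0l.
- by exists x0, [::]; rewrite big_nil addr0.
Qed.
Lemma sqzero_right (A L : V -> Prop) : subalg mul A -> semisimple mul A -> rideal A L ->
  (forall x y, L x -> L y -> x ** y = 0) -> forall x, L x -> x = 0.
Proof.
move=> [[A0 AD AZ] AM] ssA [[L0 LD LZ] LA LM] L2.
pose I x := exists l (s : seq (V * V)), [/\ L l, (forall p, p \in s -> A p.1 /\ L p.2)
   & x = l + \sum_(p <- s) p.1 ** p.2].
have sI : subspace I.
  split.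
  - by exists 0, [::]; rewrite big_nil addr0.
  - move=> x y [l [s [Ll Hs ->]]] [l' [s' [Ll' Hs' ->]]].
    exists (l + l'), (s ++ s'); split; first exact: LD.
      by move=> p; rewrite mem_cat => /orP [/Hs|/Hs'].
    by rewrite big_cat /= addrACA.
  - move=> a x [l [s [Ll Hs ->]]].
    exists (a *: l), (map (fun p => (a *: p.1, p.2)) s); split; first exact: LZ.
      move=> p /mapP [q /Hs [h1 h2] ->] /=; split=> //; exact: AZ.
    by rewrite big_map scalerDr scaler_sumr; congr (_ + _); apply: eq_bigr => p _; rewrite mZl.
have Lx : forall x y, L y -> I x -> y ** x = 0.
  move=> x y Ly [l [s [Ll Hs ->]]]; rewrite mDr L2 // add0r m_sumr big_seq big1 // => p /Hs [h1 h2].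
  by rewrite mA L2 //; apply: LM.
move=> x0 Lx0; apply: (ssA I); first split.
- exact: sI.
- move=> x [l [s [Ll Hs ->]]]; apply AD; first exact: LA.
  apply: (subsum_seq (And3 A0 AD AZ)) => p /Hs [h1 h2]; apply: AM => //; exact: LA.
- move=> a x Aa [l [s [Ll Hs ->]]]; split.
    exists 0, ((a, l) :: map (fun p => (a ** p.1, p.2)) s); split => //.
      move=> p; rewrite in_cons => /orP [/eqP -> //| /mapP [q /Hs [h1 h2] ->] /=].
      by split=> //; apply: AM.
    by rewrite mDr m_sumr big_cons big_map add0r; congr (_ + _); apply: eq_bigr => p _; rewrite mA.
  exists (l ** a), (map (fun p => (p.1, p.2 ** a)) s); split; first exact: LM.
    by move=> p /mapP [q /Hs [h1 h2] ->] /=; split=> //; apply: LM.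
  by rewrite mDl m_suml big_map; congr (_ + _); apply: eq_bigr => p _; rewrite mA.
- apply: sq0_nil => x y [l [s [Ll Hs ->]]] Iy.
  rewrite mDl (Lx y l) // add0r m_suml big_seq big1 // => p /Hs [h1 h2].
  by rewrite -mA (Lx y p.2) // m0r.
- by exists x0, [::]; rewrite big_nil addr0.
Qed.
Lemma lideal_idem (A : V -> Prop) : subalg mul A -> fin_dim A -> semisimple mul A ->
  forall L, lideal A L -> (exists x, L x /\ x <> 0) ->
  exists e, [/\ L e, e ** e = e & e <> 0].
Proof.
move=> sA fA ssA L lL.
have [[A0 AD AZ] AM] := sA.
case: (lL) => sL sLA _.
move: L sL sLA lL.
apply: (sub_ind (Pr := fun L => lideal A L -> (exists x, L x /\ x <> 0) ->
  exists e, [/\ L e, e ** e = e & e <> 0])) => // P sP sPA IH lP [x0 [Px0 nx0]].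
case: (classic (exists L1, [/\ lideal A L1, subset L1 P, (exists x, P x /\ ~ L1 x)
   & exists x, L1 x /\ x <> 0])).
  case=> L1 [lL1 s1 strict nz].
  have [sL1 _ _] := lL1.
  have [e [L1e ee ne]] := IH L1 sL1 s1 strict lL1 nz.
  by exists e; split => //; apply s1.
move=> nomin.
have mini : forall L1, lideal A L1 -> subset L1 P -> (exists x, L1 x /\ x <> 0) ->
    forall x, P x -> L1 x.
  move=> L1 lL1 s1 nz x Px; apply: NNPP => nL1x; apply: nomin; exists L1; split => //.
  by exists x.
case: lP => [[P0 PD PZ] _ PM].
have [a [b [Pa Pb ba]]] : exists a b, [/\ P a, P b & b ** a <> 0].
  apply: NNPP => H; apply: nx0; apply: (sqzero_left sA ssA (And3 sP sPA PM)) => // x y Px Py.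
  apply: NNPP => nxy; apply: H; by exists y, x.
pose La y := exists l, P l /\ y = l ** a.
have lLa : lideal A La.
  split.
  - split.
    + by exists 0; rewrite m0l.
    + by move=> x y [l [Pl ->]] [l' [Pl' ->]]; exists (l + l'); rewrite mDl; split => //; apply PD.
    + by move=> c x [l [Pl ->]]; exists (c *: l); rewrite mZl; split => //; apply PZ.
  - by move=> x [l [Pl ->]]; apply sPA; apply PM => //; apply sPA.
  - by move=> c x Ac [l [Pl ->]]; exists (c ** l); rewrite mA; split => //; apply PM.
have sLaP : subset La P by move=> x [l [Pl ->]]; apply PM => //; apply sPA.
have [e [Pe ea]] : La a by apply: (mini La) => //; exists (b ** a); split => //; exists b.
pose K0 y := P y /\ y ** a = 0.
have lK0 : lideal A K0.
  split.
  - split.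
    + by split => //; rewrite m0l.
    + by move=> x y [Px xa] [Py ya]; split; [apply PD | rewrite mDl xa ya addr0].
    + by move=> c x [Px xa]; split; [apply PZ | rewrite mZl xa scaler0].
  - by move=> x [Px _]; apply sPA.
  - by move=> c x Ac [Px xa]; split; [apply PM | rewrite -mA xa m0r].
have K0z : forall y, K0 y -> y = 0.
  move=> y Ky; apply: NNPP => ny.
  have [_ bK] : K0 b by apply: (mini K0) => //; [move=> z []| exists y].
  by apply: ba.
exists e; split => //.
  apply/eqP; rewrite -subr_eq0; apply/eqP; apply: K0z; split.
    apply: (subB sP) => //; apply PM => //; exact: sPA.
  by rewrite mBl -mA -!ea subrr.
move=> e0; apply: ba; by rewrite ea e0 m0l m0r.
Qed.
Lemma ideal_unit (A I : V -> Prop) : subalg mul A -> fin_dim A -> semisimple mul A ->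
  ideal_in mul A I ->
  exists e, [/\ I e, e ** e = e & forall x, I x -> e ** x = x /\ x ** e = x].
Proof.
move=> sA fA ssA iI.
have [[A0 AD AZ] AM] := sA.
case: (iI) => [[I0 ID IZ] sIA IM].
have sI : subspace I by [].
pose Me e x := exists y, I y /\ x = y - y ** e.
have sMe : forall e, I e -> subspace (Me e) /\ subset (Me e) A.
  move=> e Ie; split; first split.
  - by exists 0; rewrite m0l subrr.
  - move=> x y [u [Iu ->]] [v [Iv ->]]; exists (u + v); split; first exact: ID.
    by rewrite mDl opprD addrACA.
  - move=> c x [u [Iu ->]]; exists (c *: u); split; first exact: IZ.
    by rewrite mZl scalerBr.
  - move=> x [u [Iu ->]]; apply sIA; apply: (subB sI) => //.
    by case: (IM e u (sIA e Ie) Iu).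
have right : exists e, [/\ I e, e ** e = e & forall x, I x -> x ** e = x].
  have H := sub_ind fA (Pr := fun M => forall e, I e -> e ** e = e ->
     (forall x, M x <-> Me e x) ->
     exists e', [/\ I e', e' ** e' = e' & forall x, I x -> x ** e' = x]).
  have [s0 s0A] := sMe 0 I0.
  apply: (H _ (Me 0) s0 s0A 0 I0 (m0l 0)) => // P sP sPA IH e Ie ee PE.
  case: (classic (exists x, P x /\ x <> 0)); last first.
    move=> nz; exists e; split => // x Ix; apply/eqP; rewrite -subr_eq0; apply/eqP.
    apply: NNPP => nx; apply: nz; exists (x - x ** e); split; first by apply/PE; exists x.
    by move=> h; apply: nx; rewrite -opprB h oppr0.
  move=> nzP.
  have lP : lideal A P.
    split => // a z Aa /PE [y [Iy zE]]; rewrite zE; apply/PE; exists (a ** y); split.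
      by case: (IM a y Aa Iy).
    by rewrite mBr mA.
  have [f [Pf ff nf]] := lideal_idem sA fA ssA lP nzP.
  have [y [Iy fE]] := (PE f).1 Pf.
  have fe : f ** e = 0 by rewrite fE mBl -mA ee subrr.
  have If : I f by rewrite fE; apply: (subB sI) => //; by case: (IM e y (sIA e Ie) Iy).
  have Ief : I (e ** f) by case: (IM e f (sIA e Ie) If).
  pose g := f - e ** f.
  have gE : g = f - e ** f by [].
  clearbody g.
  have Ig : I g by rewrite gE; apply: (subB sI).
  have ge : g ** e = 0 by rewrite gE mBl -mA fe m0r subrr.
  have eg : e ** g = 0 by rewrite gE mBr mA ee subrr.
  have gg : g ** g = g.
    have fg : f ** g = f by rewrite gE mBr ff mA fe m0l subr0.
    by rewrite {1}gE mBl -mA fg.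
  have ng : g <> 0.
    move=> g0; apply: nf; have fef : f = e ** f by apply/eqP; rewrite -subr_eq0; apply/eqP; rewrite -gE.
    by rewrite -ff {2}fef (mA f e f) fe m0l.
  pose e' := e + g.
  have e'E : e' = e + g by [].
  clearbody e'.
  have Ie' : I e' by rewrite e'E; apply: ID.
  have ee' : e' ** e' = e'.
    by rewrite e'E mDl !mDr ee eg ge gg addr0 add0r.
  have [sM' sM'A] := sMe e' Ie'.
  apply: (IH (Me e') sM' _ _ e' Ie' ee') => //.
    move=> x [u [Iu ->]]; apply/PE; exists (u - u ** g); split.
      apply: (subB sI) => //; by case: (IM g u (sIA g Ig) Iu).
    by rewrite mBl -mA ge m0r subr0 e'E mDr opprD addrAC addrA.
  exists g; split; first by apply/PE; exists g; split => //; rewrite ge subr0.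
  case=> u [Iu gU].
  have : g ** e' = 0 by rewrite gU mBl -mA ee' subrr.
  by rewrite e'E mDr ge gg add0r.
have [e [Ie ee eR]] := right.
exists e; split => // x Ix; split; last by apply: eR.
pose N x := exists y, I y /\ x = y - e ** y.
have rN : rideal A N.
  split; first split.
  - by exists 0; rewrite m0r subrr.
  - move=> u v [a [Ia ->]] [b [Ib ->]]; exists (a + b); split; first exact: ID.
    by rewrite mDr opprD addrACA.
  - move=> c u [a [Ia ->]]; exists (c *: a); split; first exact: IZ.
    by rewrite mZr scalerBr.
  - move=> u [a [Ia ->]]; apply sIA; apply: (subB sI) => //.
    by case: (IM e a (sIA e Ie) Ia).
  - move=> c u Ac [a [Ia ->]]; exists (a ** c); split; first by case: (IM c a Ac Ia).
    by rewrite mBl mA.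
have := sqzero_right sA ssA rN.
have N2 : forall u v, N u -> N v -> u ** v = 0.
  move=> u v [a [Ia ->]] [b [Ib ->]].
  have ne : (a - e ** a) ** e = a - e ** a by rewrite mBl eR // -mA eR.
  by rewrite mBr mA ne subrr.
move=> /(_ N2 (x - e ** x)) H; apply/eqP; rewrite eq_sym -subr_eq0; apply/eqP; apply: H.
by exists x.
Qed.
Lemma seq_in_cons (y : V) s (A : V -> Prop) : seq_in (y :: s) A <-> A y /\ seq_in s A.
Proof.
split.
  by move=> H; split; [apply: (H 0%N) | move=> i hi; apply: (H i.+1)].
by case=> Ay Hs [|i] //= hi; apply: Hs.
Qed.

Lemma foldl_ideal (A I : V -> Prop) x s : ideal_in mul A I -> I x -> seq_in s A ->
  I (foldl mul x s).
Proof.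
move=> [_ _ IM]; elim: s x => [|y s IH] x Ix //= /seq_in_cons [Ay Hs].
by apply: IH => //; case: (IM y x Ay Ix).
Qed.

Lemma foldl_hom (A : V -> Prop) (f : V -> V) x s : subalg mul A ->
  (forall a b, A a -> A b -> f (a ** b) = f a ** f b) ->
  A x -> seq_in s A -> f (foldl mul x s) = foldl mul (f x) (map f s).
Proof.
move=> [_ AM] fM; elim: s x => [|y s IH] x Ax //= /seq_in_cons [Ay Hs].
by rewrite IH ?fM //; apply: AM.
Qed.

Lemma foldl_fix x w n : x ** w = x -> foldl mul x (nseq n w) = x.
Proof. by move=> h; elim: n => //= n IH; rewrite h. Qed.

Lemma seq_in_nseq n w (A : V -> Prop) : A w -> seq_in (nseq n w) A.
Proof. by move=> Aw i; rewrite size_nseq => hi; rewrite nth_nseq hi. Qed.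

Lemma seq_in_map (f : V -> V) s (A B : V -> Prop) : seq_in s A ->
  (forall x, A x -> B (f x)) -> seq_in (map f s) B.
Proof.
move=> Hs Hf i; rewrite size_map => hi; rewrite (nth_map 0) //; apply: Hf; exact: Hs.
Qed.

Lemma seq_in_sub s (A B : V -> Prop) : seq_in s A -> subset A B -> seq_in s B.
Proof. by move=> Hs sAB i hi; apply: sAB; apply: Hs. Qed.

Lemma self_ideal (A : V -> Prop) : subalg mul A -> ideal_in mul A A.
Proof. by case=> sA AM; split => // a x Aa Ax; split; apply: AM. Qed.

Lemma corner_ss (B0 : V -> Prop) e : subalg mul B0 -> fin_dim B0 -> semisimple mul B0 ->
  B0 e -> e ** e = e -> semisimple mul (fun x => exists b, B0 b /\ x = e ** b ** e).
Proof.
move=> sB fB ssB Be ee I iI [n nI] x Ix.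
have [[B00 B0D B0Z] BM] := sB.
have [u [Bu uu uid]] := ideal_unit sB fB ssB (self_ideal sB).
case: (iI) => [[I0 ID IZ] sIS IM].
have IB : forall y, I y -> B0 y.
  move=> y /sIS [b [Bb ->]]; apply BM => //; exact: BM.
have Ie : forall y, I y -> e ** y = y /\ y ** e = y.
  by move=> y /sIS [b [Bb ->]]; split; [by rewrite !mA ee | by rewrite -mA ee].
pose Ih y := exists s : seq (V * V * V), (forall p, p \in s -> [/\ B0 p.1.1, I p.1.2 & B0 p.2])
   /\ y = \sum_(p <- s) p.1.1 ** p.1.2 ** p.2.
have iIh : ideal_in mul B0 Ih.
  split; first split.
  - by exists [::]; rewrite big_nil.
  - move=> y z [s [Hs ->]] [s' [Hs' ->]]; exists (s ++ s'); split; last by rewrite big_cat.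
    by move=> p; rewrite mem_cat => /orP [/Hs|/Hs'].
  - move=> c y [s [Hs ->]]; exists (map (fun p => (c *: p.1.1, p.1.2, p.2)) s); split.
      by move=> p /mapP [q /Hs [h1 h2 h3] ->] /=; split => //; apply B0Z.
    by rewrite big_map scaler_sumr; apply: eq_bigr => p _; rewrite !mZl.
  - move=> y [s [Hs ->]]; apply: (subsum_seq (And3 B00 B0D B0Z)) => p /Hs [h1 h2 h3].
    by apply BM => //; apply BM => //; apply IB.
  - move=> a y Ba [s [Hs ->]]; split.
      exists (map (fun p => (a ** p.1.1, p.1.2, p.2)) s); split.
        by move=> p /mapP [q /Hs [h1 h2 h3] ->] /=; split => //; apply BM.
      by rewrite m_sumr big_map; apply: eq_bigr => p _; rewrite !mA.
    exists (map (fun p => (p.1.1, p.1.2, p.2 ** a)) s); split.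
      by move=> p /mapP [q /Hs [h1 h2 h3] ->] /=; split => //; apply BM.
    by rewrite m_suml big_map; apply: eq_bigr => p _; rewrite !mA.
have [f [Ihf ff fid]] := ideal_unit sB fB ssB iIh.
have IIh : forall y, I y -> Ih y.
  move=> y Iy; exists [:: (u, y, u)]; split.
    by move=> p; rewrite inE => /eqP -> /=; split.
  by rewrite big_cons big_nil addr0 /=; case: (uid y (IB y Iy)) => -> ->.
have Iw : I (e ** f ** e).
  case: Ihf => s [Hs ->]; rewrite m_sumr m_suml.
  apply: (subsum_seq (And3 I0 ID IZ)) => p /Hs [h1 h2 h3].
  have -> : e ** (p.1.1 ** p.1.2 ** p.2) ** e = e ** p.1.1 ** e ** p.1.2 ** (e ** p.2 ** e).
    by rewrite -{1}(proj1 (Ie _ h2)) -{1}(proj2 (Ie _ h2)) !mA.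
  have Se1 : exists b, B0 b /\ e ** p.1.1 ** e = e ** b ** e by exists p.1.1.
  have Se2 : exists b, B0 b /\ e ** p.2 ** e = e ** b ** e by exists p.2.
  case: (IM _ _ Se1 h2) => H1 _; by case: (IM _ _ Se2 H1).
have xw : x ** (e ** f ** e) = x.
  have [ex xe] := Ie x Ix; have [fx xf] := fid x (IIh x Ix).
  by rewrite !mA xe xf xe.
rewrite -(foldl_fix n xw); apply nI => //; last by rewrite size_nseq.
exact: seq_in_nseq.
Qed.
Lemma image_ss (T : V -> Prop) e : subalg mul T -> fin_dim T -> semisimple mul T ->
  (forall t, T t -> e ** t = t ** e) -> e ** e = e ->
  semisimple mul (fun x => exists t, T t /\ x = t - e ** t).
Proof.
move=> sT fT ssT ec ee N iN [n nN] x Nx.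
have [[T0 TD TZ] TM] := sT.
pose phi t := t - e ** t.
have phiM : forall a b, T a -> T b -> phi (a ** b) = phi a ** phi b.
  move=> a b Ta Tb.
  have eae : e ** a ** e = e ** a by rewrite -mA -ec // mA ee.
  by rewrite /phi mBl !mBr !mA eae -(ec a Ta) subrr subr0.
pose Z t := T t /\ t = e ** t.
have iZ : ideal_in mul T Z.
  split; first split.
  - by split; rewrite ?m0r.
  - move=> a b [Ta aE] [Tb bE]; split; [by apply TD | by rewrite mDr -aE -bE].
  - move=> c a [Ta aE]; split; [by apply TZ | by rewrite mZr -aE].
  - by move=> t [].
  - move=> a t Ta [Tt tE]; split; split; try by apply TM.
      by rewrite mA ec // -mA -tE.
    by rewrite mA -tE.
have [z [[Tz zE] zz zid]] := ideal_unit sT fT ssT iZ.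
have zc : forall a, T a -> a ** z = z ** a.
  move=> a Ta; case: (iZ) => _ _ IM; case: (IM a z Ta (conj Tz zE)) => h1 h2.
  by rewrite -(proj1 (zid _ h1)) mA (proj2 (zid _ h2)).
have phiz : phi z = 0 by rewrite /phi -zE subrr.
case: (iN) => [[N0 ND NZ] sNT NM].
pose P t := T t /\ N (phi t).
pose P' w := exists t, P t /\ w = t - z ** t.
have phiw : forall t, T t -> phi (t - z ** t) = phi t.
  by move=> t Tt; rewrite /phi mBr mA -zE opprB addrA subrK.
have iP' : ideal_in mul T P'.
  split; first split.
  - exists 0; split; last by rewrite m0r subrr.
    by split => //; rewrite /phi m0r subrr.
  - move=> a b [t [[Tt Nt] ->]] [t' [[Tt' Nt'] ->]]; exists (t + t'); split.
      split; first exact: TD.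
      by rewrite /phi mDr opprD addrACA; apply: ND.
    by rewrite mDr opprD addrACA.
  - move=> c a [t [[Tt Nt] ->]]; exists (c *: t); split.
      split; first exact: TZ.
      by rewrite /phi mZr -scalerBr; apply: NZ.
    by rewrite mZr scalerBr.
  - move=> w [t [[Tt _] ->]]; apply: (subB (And3 T0 TD TZ)) => //; exact: TM.
  - move=> a w Ta [t [[Tt Nt] ->]].
    have Tat : T (a ** t) by apply: TM.
    have Tta : T (t ** a) by apply: TM.
    have Na : exists t, T t /\ phi a = t - e ** t by exists a.
    split.
      exists (a ** t); split.
        by split => //; rewrite phiM //; case: (NM _ _ Na Nt).
      by rewrite mBr mA zc // -mA.
    exists (t ** a); split.
      by split => //; rewrite phiM //; case: (NM _ _ Na Nt).
    by rewrite mBl -mA.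
have P'T : forall w, P' w -> T w by case: iP'.
have P'N : forall w, P' w -> N (phi w).
  by move=> w [t [[Tt Nt] ->]]; rewrite phiw.
have P'0 : forall w, P' w -> w = 0.
  apply: (ssT P' iP'); exists n => w s Pw Hs sz.
  have Pp := foldl_ideal iP' Pw (seq_in_sub Hs P'T).
  have php : phi (foldl mul w s) = 0.
    rewrite (foldl_hom sT phiM (P'T _ Pw) (seq_in_sub Hs P'T)).
    apply: nN; first exact: P'N.
      by apply: (seq_in_map Hs).
    by rewrite size_map.
  case: Pp => t [[Tt _] pE]; rewrite pE.
  have Zp : Z (t - z ** t).
    split; first by apply: (subB (And3 T0 TD TZ)) => //; apply TM.
    by apply/eqP; rewrite -subr_eq0; apply/eqP; rewrite -pE.
  by rewrite -(proj1 (zid _ Zp)) mBr mA zz subrr.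
have := Nx; move/sNT => [t [Tt xE]].
have Pt : P t by split => //; rewrite /phi -xE.
have w0 := P'0 _ (ex_intro _ t (conj Pt erefl)).
rewrite xE -/(phi t) -(phiw t Tt) w0 /phi m0r subrr.
done.
Qed.
Lemma ideal_restrict (B C I : V -> Prop) : subalg mul C -> subset C B ->
  ideal_in mul B I -> nilpotent mul I ->
  ideal_in mul C (fun y => I y /\ C y) /\ nilpotent mul (fun y => I y /\ C y).
Proof.
move=> [[C0 CD CZ] CM] sCB [[I0 ID IZ] sIB IM] [n nI]; split.
  split; first split.
  - by [].
  - by move=> x y [Ix Cx] [Iy Cy]; split; [apply: ID | apply: CD].
  - by move=> a x [Ix Cx]; split; [apply: IZ | apply: CZ].
  - by move=> x [].
  - move=> a x Ca [Ix Cx]; have [h1 h2] := IM a x (sCB a Ca) Ix.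
    by split; split => //; apply: CM.
exists n => x s [Ix _] Hs sz; apply: nI => //.
by apply: (seq_in_sub Hs) => y [].
Qed.

Lemma sum_ss (S T' : V -> Prop) e : subalg mul S -> subalg mul T' ->
  semisimple mul S -> semisimple mul T' -> S e ->
  (forall s, S s -> e ** s = s) -> (forall t, T' t -> e ** t = 0) ->
  semisimple mul (fun x => exists s t, [/\ S s, T' t & x = s + t]).
Proof.
move=> sS sT ssS ssT Se eS eT I iI nI x Ix.
pose B := fun x => exists s t, [/\ S s, T' t & x = s + t].
have [[S0 _ _] _] := sS.
have [[T0 _ _] _] := sT.
have SB : subset S B by move=> s Ss; exists s, 0; rewrite addr0.
have TB : subset T' B by move=> t Tt; exists 0, t; rewrite add0r.
have [iS nS] := ideal_restrict sS SB iI nI.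
have [iT nT] := ideal_restrict sT TB iI nI.
case: (iI) => _ sIB IM.
have inT : forall y, I y -> T' y.
  move=> y Iy; have [s [t [Ss Tt yE]]] := sIB y Iy.
  have Iey : I (e ** y) by case: (IM e y (SB e Se) Iy).
  have : e ** y = s by rewrite yE mDr eS // eT // addr0.
  move=> eys; have s0 : s = 0 by apply: (ssS _ iS nS); split => //; rewrite -eys.
  by rewrite yE s0 add0r.
by apply: (ssT _ iT nT); split => //; apply: inT.
Qed.
Lemma assemble (B0 T : V -> Prop) e : fdss mul B0 -> fdss mul T -> B0 e -> e ** e = e ->
  (forall t, T t -> e ** t = t ** e) ->
  fdss mul (fun x => exists s t, [/\ (exists b, B0 b /\ s = e ** b ** e),
                                    (exists u, T u /\ t = u - e ** u) & x = s + t]).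
Proof.
move=> [sB fB ssB] [sT fT ssT] Be ee ec.
have [[B00 B0D B0Z] B0M] := sB.
have xee : forall x, x ** e ** e = x ** e by move=> x; rewrite -mA ee.
have [[T0 TD TZ] TM] := sT.
pose S := fun s => exists b, B0 b /\ s = e ** b ** e.
pose T' := fun t => exists u, T u /\ t = u - e ** u.
have sS : subalg mul S.
  split; first split.
  - by exists 0; rewrite m0r m0l.
  - move=> x y [b [Bb ->]] [c [Bc ->]]; exists (b + c); split; first exact: B0D.
    by rewrite mDr mDl.
  - move=> a x [b [Bb ->]]; exists (a *: b); split; first exact: B0Z.
    by rewrite mZr mZl.
  - move=> x y [b [Bb ->]] [c [Bc ->]]; exists (b ** e ** c); split.
      by apply B0M => //; apply B0M.
    by rewrite !mA xee.
have sT' : subalg mul T'.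
  split; first split.
  - by exists 0; rewrite m0r subrr.
  - move=> x y [b [Bb ->]] [c [Bc ->]]; exists (b + c); split; first exact: TD.
    by rewrite mDr opprD addrACA.
  - move=> a x [b [Bb ->]]; exists (a *: b); split; first exact: TZ.
    by rewrite mZr scalerBr.
  - move=> x y [a [Ta ->]] [b [Tb ->]]; exists (a ** b); split; first by apply TM.
    have eae : e ** a ** e = e ** a by rewrite -mA -ec // mA ee.
    by rewrite mBl !mBr !mA eae -(ec a Ta) subrr subr0.
have eS : forall s, S s -> e ** s = s /\ s ** e = s.
  by move=> s [b [Bb ->]]; split; [rewrite !mA ee | rewrite xee].
have eT : forall t, T' t -> e ** t = 0 /\ t ** e = 0.
  move=> t [u [Tu ->]]; split; first by rewrite mBr mA ee subrr.
  by rewrite mBl -mA -ec // mA ee subrr.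
have Se : S e by exists e; split => //; rewrite !ee.
split.
- split; first split.
  + by exists 0, 0; split; rewrite ?addr0 //; [case: sS => [[]] | case: sT' => [[]]].
  + move=> x y [s [t [Ss Tt ->]]] [s' [t' [Ss' Tt' ->]]]; exists (s + s'), (t + t'); split.
    * by case: sS => [[_ h _] _]; apply: h.
    * by case: sT' => [[_ h _] _]; apply: h.
    * by rewrite addrACA.
  + move=> a x [s [t [Ss Tt ->]]]; exists (a *: s), (a *: t); split.
    * by case: sS => [[_ _ h] _]; apply: h.
    * by case: sT' => [[_ _ h] _]; apply: h.
    * by rewrite scalerDr.
  + move=> x y [s [t [Ss Tt ->]]] [s' [t' [Ss' Tt' ->]]]; exists (s ** s'), (t ** t'); split.
    * by case: sS => [_ h]; apply: h.
    * by case: sT' => [_ h]; apply: h.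
    * have st : s ** t' = 0 by rewrite -(proj2 (eS s Ss)) -mA (proj1 (eT t' Tt')) m0r.
      have ts : t ** s' = 0 by rewrite -(proj1 (eS s' Ss')) mA (proj2 (eT t Tt)) m0l.
      by rewrite mDl !mDr st ts addr0 add0r.
- apply: fin_dim_add.
  + apply: fin_dim_image => //; first by rewrite m0r m0l.
      by move=> x y; rewrite mDr mDl.
    by move=> a x; rewrite mZr mZl.
  + apply: fin_dim_image => //; first by rewrite m0r subrr.
      by move=> x y; rewrite mDr opprD addrACA.
    by move=> a x; rewrite mZr scalerBr.
- apply: (sum_ss sS sT' _ _ Se); first exact: corner_ss.
  + exact: image_ss.
  + by move=> s /eS [].
  + by move=> t /eT [].
Qed.

Lemma decomp_list (T J : V -> Prop) X : (forall x, exists t j, [/\ T t, J j & x = t + j]) ->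
  exists ts js, [/\ size ts = size X, size js = size X &
    forall i, (i < size X)%N -> [/\ T ts`_i, J js`_i & X`_i = ts`_i + js`_i]].
Proof.
move=> H; elim: X => [|x X [ts [js [h1 h2 h3]]]]; first by exists [::], [::].
have [t [j [Tt Jj xE]]] := H x.
exists (t :: ts), (j :: js); split; rewrite /= ?h1 ?h2 //.
by case=> [|i] //= hi; apply: h3.
Qed.
End Alg.

Unset Implicit Arguments.

Theorem lemma4p2 (K : fieldType) (V : lmodType K) (mul : V -> V -> V)
  (J T : V -> Prop) :
  is_nualg mul ->
  ideal_in mul (fun _ => True) J ->
  locally_fdss mul J ->
  fdss mul T ->
  (forall x : V, exists t j, [/\ T t, J j & x = t + j]) ->
  (forall x : V, T x -> J x -> x = 0) ->
  (locally_fdss mul (fun _ => True) <->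
   forall Y : seq V, seq_in Y J ->
     exists e : V, [/\ J e, mul e e = e,
       (forall i, (i < size Y)%N ->
          exists j, J j /\ nth 0 Y i = mul (mul e j) e)
     & forall t, T t -> mul e t = mul t e]).
Proof.
move=> alg iJ lJ fdT dec dis.
have [sT fT ssT] := fdT.
have [[T0 TD TZ] TM] := sT.
case: (iJ) => [[J0 JD JZ] _ JM].
have [sTl hsT] := fT.
split.
- move=> locR Y HY.
  have [B [[sB fB ssB] _ HB]] := locR (Y ++ sTl) (fun _ _ => I).
  have [[B0 BD BZ] BM] := sB.
  pose Ii x := B x /\ J x.
  have iI : ideal_in mul B Ii.
    split; first split.
    + by [].
    + by move=> x y [Bx Jx] [By Jy]; split; [apply: BD | apply: JD].
    + by move=> a x [Bx Jx]; split; [apply: BZ | apply: JZ].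
    + by move=> x [].
    + move=> a x Ba [Bx Jx]; have [h1 h2] := JM a x I Jx.
      by split; split => //; apply: BM.
  have [e [[Be Je] ee eid]] := @ideal_unit _ _ mul alg _ _ sB fB ssB iI.
  have TB : forall t, T t -> B t.
    move=> t /hsT; apply: (span_sub (And3 B0 BD BZ)) => i hi.
    have := HB (size Y + i)%N; rewrite size_cat ltn_add2l nth_cat (ltnNge (size Y + i) (size Y)) leq_addr /= addKn.
    by apply.
  exists e; split => //.
  + move=> i hi; exists (nth 0 Y i); split; first exact: HY.
    have IY : Ii (nth 0 Y i).
      split; last exact: HY.
      have := HB i; rewrite size_cat nth_cat hi; apply; exact: ltn_addr.
    by rewrite (proj1 (eid _ IY)) (proj2 (eid _ IY)).
  + move=> t Tt; have Bt := TB t Tt.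
    have Iet : Ii (mul e t) by split; [apply: BM | case: (JM t e I Je)].
    have Ite : Ii (mul t e) by split; [apply: BM | case: (JM t e I Je)].
    by rewrite -(proj2 (eid _ Iet)) -(mA alg) (proj1 (eid _ Ite)).
- move=> HE X _.
  have [ts [js [sts sjs Hd]]] := decomp_list X dec.
  have HJ : seq_in js J by move=> i hi; rewrite sjs in hi; case: (Hd i hi).
  have [e [Je ee Hj ec]] := HE js HJ.
  pose L0 := js ++ e :: map (mul e) sTl.
  have HL0 : seq_in L0 J.
    move=> i; rewrite size_cat /= size_map => hi; rewrite nth_cat; case: ifP => h1.
      exact: HJ.
    case E: (i - size js)%N => [|k] //=.
    have hk : (k < size sTl)%N.
      by move: hi; rewrite -ltn_subLR ?E // leqNgt h1.
    by rewrite (nth_map 0) //; case: (JM (nth 0 sTl k) e I Je).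
  have [B0 [fdB0 _ HB0]] := lJ L0 HL0.
  have [sB0 _ _] := fdB0.
  have [[B00 B0D B0Z] B0M] := sB0.
  have B0e : B0 e.
    have := HB0 (size js); rewrite /L0 size_cat nth_cat ltnn subnn /=; apply.
    by rewrite -addn1 leq_add2l.
  have B0j : forall i, (i < size js)%N -> B0 js`_i.
    move=> i hi; have := HB0 i; rewrite /L0 size_cat nth_cat hi; apply; exact: ltn_addr.
  have B0et : forall t, T t -> B0 (mul e t).
    move=> t /hsT; apply: (span_sub (P := fun t => B0 (mul e t))).
      split.
      * by rewrite (m0r alg).
      * by move=> x y Bx By; rewrite (mDr alg); apply: B0D.
      * by move=> a x Bx; rewrite (mZr alg); apply: B0Z.
    move=> k hk; have := HB0 (size js + k.+1)%N.
    rewrite /L0 size_cat nth_cat (ltnNge (size js + k.+1) (size js)) leq_addr /= addKn /= (nth_map 0) //; apply.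
    by rewrite ltn_add2l /= size_map ltnS.
  have := @assemble _ _ mul alg B0 T e fdB0 fdT B0e ee ec.
  move=> fdB; eexists; split; [exact: fdB | by [] |].
  move=> i hi; have [Tt Jj xE] := Hd i hi.
  have hj : (i < size js)%N by rewrite sjs.
  exists (js`_i + mul e ts`_i), (ts`_i - mul e ts`_i); split.
  + exists (js`_i + mul e ts`_i); split; first by apply: B0D; [apply: B0j | apply: B0et].
    have [j [_ jE]] := Hj i hj.
    rewrite (mDr alg) (mDl alg); congr (_ + _).
      by rewrite jE !(mA alg) ee -(mA alg (mul e j)) ee.
    by rewrite !(mA alg) ee -(mA alg e) -ec // (mA alg) ee.
  + by exists ts`_i.
  + by rewrite xE addrACA subrr addr0 addrC.
Qed.
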